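(* Let $\mathcal A$ be a unital $C^*$-algebra and $\mathcal F\subseteq\mathcal A$ an algebra of finite type elements. For every projection $p\in\mathcal F$ there is an approximate unit $(p_\alpha)$ for $\mathcal F$ consisting of projections such that $p\le p_\alpha$ for all $\alpha$.
   Context: Let $\mathcal A$ be a unital $C^*$-algebra. A subalgebra $\mathcal F\subseteq\mathcal A$ is an algebra of finite type elements if: (i) $\mathcal F$ is a self-adjoint two-sided ideal of $\mathcal A$; (ii) $\mathcal F$ has an approximate unit consisting of projections, i.e. a net $(p_\alpha)$ of projections in $\mathcal F$ with $\|f-p_\alpha f\|\to0$ and $\|f-fp_\alpha\|\to0$ for every $f\in\mathcal F$; (iii) for any projections $p,q\in\mathcal F$ there is $v\in\mathcal A$ with $vv^*=q$ and $v^*vp=0$. *)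

(* Defs.v *)
From HB Require Import structures.
From mathcomp Require Import all_boot all_order all_algebra.
From mathcomp Require Import reals.
From mathcomp.real_closed Require Import complex.
Set Implicit Arguments. Unset Strict Implicit. Unset Printing Implicit Defensive.
Import Order.TTheory GRing.Theory Num.Theory.
Local Open Scope ring_scope.

HB.mixin Record isCStarAlgebra (R : realType) A of GRing.UnitAlgebra R[i] A := {
  cnorm : A -> R;
  cnorm_ge0 : forall a : A, 0 <= cnorm a;
  cnorm_eq0 : forall a : A, cnorm a = 0 -> a = 0;
  cnormD : forall a b : A, cnorm (a + b) <= cnorm a + cnorm b;
  cnormZ : forall (c : R[i]) (a : A), cnorm (c *: a) = ComplexField.Normc.normc c * cnorm a;
  cnorm_complete : forall u : nat -> A,
    (forall e : R, 0 < e -> exists N : nat, forall m n : nat,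
        (N <= m)%N -> (N <= n)%N -> cnorm (u m - u n) < e) ->
    exists l : A, forall e : R, 0 < e -> exists N : nat, forall n : nat,
        (N <= n)%N -> cnorm (u n - l) < e;
  cnormM : forall a b : A, cnorm (a * b) <= cnorm a * cnorm b;
  cnorm1 : cnorm (1 : A) = 1;
  cstar : A -> A;
  cstarK : involutive cstar;
  cstarD : forall a b : A, cstar (a + b) = cstar a + cstar b;
  cstarZ : forall (c : R[i]) (a : A), cstar (c *: a) = (Num.conj c) *: cstar a;
  cstarM : forall a b : A, cstar (a * b) = cstar b * cstar a;
  cstar_identity : forall a : A, cnorm (cstar a * a) = cnorm a ^+ 2
}.

#[short(type="cstarAlgType")]
HB.structure Definition CStarAlgebra (R : realType) :=
  {A of isCStarAlgebra R A & GRing.UnitAlgebra R[i] A}.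

Section CStarDefs.
Variables (R : realType) (A : cstarAlgType R).

Definition is_projection (p : A) : Prop := p * p = p /\ cstar p = p.

Definition self_adjoint (a : A) : Prop := cstar a = a.

Definition spectrum (a : A) : R[i] -> Prop :=
  fun z => ~ (a - z%:A \is a GRing.unit).

Definition positive (a : A) : Prop :=
  self_adjoint a /\ forall z : R[i], spectrum a z -> 0 <= z.

Definition cle (a b : A) : Prop :=
  self_adjoint a /\ self_adjoint b /\ positive (b - a).

Definition sa_ideal (F : A -> Prop) : Prop :=
  [/\ F 0,
      (forall f g, F f -> F g -> F (f + g)),
      (forall (c : R[i]) f, F f -> F (c *: f)),
      (forall a f, F f -> F (a * f) /\ F (f * a))
    & (forall f, F f -> F (cstar f))].

Definition directed (I : Type) (le : I -> I -> Prop) : Prop :=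
  [/\ inhabited I,
      (forall i, le i i),
      (forall i j k, le i j -> le j k -> le i k)
    & (forall i j, exists k, le i k /\ le j k)].

Definition net_to0 (I : Type) (le : I -> I -> Prop) (x : I -> A) : Prop :=
  forall e : R, 0 < e -> exists i0 : I, forall i, le i0 i -> cnorm (x i) < e.

Definition proj_approx_unit (F : A -> Prop)
    (I : Type) (le : I -> I -> Prop) (p : I -> A) : Prop :=
  [/\ directed le,
      (forall i, is_projection (p i) /\ F (p i))
    & (forall f, F f -> net_to0 le (fun i => f - p i * f)
                     /\ net_to0 le (fun i => f - f * p i))].

Definition finite_type_algebra (F : A -> Prop) : Prop :=
  [/\ sa_ideal F,
      (exists (I : Type) (le : I -> I -> Prop) (p : I -> A),
          proj_approx_unit F le p)
    & (forall p q, is_projection p -> F p -> is_projection q -> F q ->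
         exists v : A, v * cstar v = q /\ cstar v * v * p = 0)].

End CStarDefs.

(* Main.v *)
Require Import Defs.
From HB Require Import structures.
From mathcomp Require Import all_boot all_order all_algebra.
From mathcomp Require Import reals.
From mathcomp.real_closed Require Import complex.
From mathcomp Require Import ring lra.
Import Order.TTheory GRing.Theory Num.Theory.
Local Open Scope ring_scope.
Set Implicit Arguments. Unset Strict Implicit.

Section Basics.
Variables (R : realType) (A : cstarAlgType R).
Implicit Types a b : A.

Lemma normc0 : ComplexField.Normc.normc (0 : R[i]) = 0.
Proof. by rewrite /ComplexField.Normc.normc /= expr0n /= addr0 sqrtr0. Qed.

Lemma normcN1 : ComplexField.Normc.normc (-1 : R[i]) = 1.
Proof. by rewrite /ComplexField.Normc.normc /= oppr0 expr0n /= addr0 sqrrN expr1n sqrtr1. Qed.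

Lemma cnorm0 : cnorm (0 : A) = 0.
Proof. by rewrite -(scale0r (1:A)) cnormZ normc0 mul0r. Qed.

Lemma cnormN a : cnorm (- a) = cnorm a.
Proof. by rewrite -scaleN1r cnormZ normcN1 mul1r. Qed.

Lemma cnormB a b : cnorm (a - b) = cnorm (b - a).
Proof. by rewrite -cnormN opprB. Qed.

Lemma cnormBle a b : cnorm (a - b) <= cnorm a + cnorm b.
Proof. by rewrite -(cnormN b); apply: cnormD. Qed.

Lemma cstar0 : cstar (0 : A) = 0.
Proof.
have h := cstarD (0:A) 0; rewrite addr0 in h.
by apply: (@addrI _ (cstar (0:A))); rewrite -h addr0.
Qed.

Lemma cstarN a : cstar (- a) = - cstar a.
Proof.
apply: (@addrI _ (cstar a)); by rewrite -cstarD !subrr cstar0.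
Qed.

Lemma cstarB a b : cstar (a - b) = cstar a - cstar b.
Proof. by rewrite cstarD cstarN. Qed.

Lemma cstar1 : cstar (1 : A) = 1.
Proof.
have h := cstarM 1 (cstar (1:A)). rewrite cstarK !mul1r cstarK in h.
by rewrite -h.
Qed.

Lemma cnorm_cstar_le a : cnorm a <= cnorm (cstar a).
Proof.
have := cstar_identity a; have := cnormM (cstar a) a.
move=> h1 h2; rewrite h2 expr2 in h1.
have [->|pos] := eqVneq (cnorm a) 0; first exact: cnorm_ge0.
have ha : 0 < cnorm a by rewrite lt0r pos cnorm_ge0.
by rewrite ler_pM2r in h1.
Qed.

Lemma cnorm_cstar a : cnorm (cstar a) = cnorm a.
Proof.
apply/eqP; rewrite eq_le cnorm_cstar_le andbT.
by rewrite -{2}(cstarK a) cnorm_cstar_le.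
Qed.

Lemma cnorm_proj a : is_projection a -> cnorm a <= 1.
Proof.
case=> aa sa; have := cstar_identity a; rewrite sa aa expr2 => h.
have [->|pos] := eqVneq (cnorm a) 0; first exact: ler01.
have ha : 0 < cnorm a by rewrite lt0r pos cnorm_ge0.
have : cnorm a * 1 = cnorm a * cnorm a by rewrite mulr1.
by move/(mulfI pos) <-.
Qed.

Lemma cnorm_small0 a : (forall e : R, 0 < e -> cnorm a < e) -> a = 0.
Proof.
move=> h; apply: cnorm_eq0; apply/eqP; rewrite eq_le cnorm_ge0 andbT.
apply/ler_addgt0Pr => e e0; rewrite add0r; apply/ltW; exact: h.
Qed.
End Basics.
Section Neumann.
Variables (R : realType) (A : cstarAlgType R).

Lemma half_small (e : R) : 0 < e -> exists N : nat, forall n, (N <= n)%N -> (2^-1)^+n < e.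
Proof.
move=> e0; have ei : 0 <= e^-1 by rewrite invr_ge0 ltW.
exists (Num.Def.archi_bound e^-1) => n hn.
have h1 := archi_boundP ei.
have h2 : e^-1 < 2 ^+ n.
  apply: (lt_le_trans h1); rewrite -natrX ler_nat.
  by apply: (leq_trans hn); apply: ltnW; apply: ltn_expl.
rewrite exprVn invf_plt ?posrE ?exprn_gt0 //.
Qed.

Lemma cnormX (y : A) n : cnorm (y ^+ n) <= cnorm y ^+ n.
Proof.
elim: n => [|n ih]; first by rewrite !expr0 cnorm1.
rewrite !exprS; apply: (le_trans (cnormM _ _)).
by apply: ler_wpM2l; [exact: cnorm_ge0 | exact: ih].
Qed.

Lemma cnormM3 (a b c : A) : cnorm (a * b * c) <= cnorm a * cnorm b * cnorm c.
Proof.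
apply: (le_trans (cnormM _ _)); apply: ler_wpM2r; first exact: cnorm_ge0.
exact: cnormM.
Qed.

Variable y : A.
Hypothesis hy : cnorm y <= 2^-1.

Fixpoint S (n : nat) : A := if n is m.+1 then 1 + y * S m else 0.

Lemma Sadd n k : S (n + k) = S n + y ^+ n * S k.
Proof.
elim: n => [|n ih]; first by rewrite add0n expr0 mul1r add0r.
by rewrite addSn /= ih mulrDr addrA exprS mulrA.
Qed.

Lemma Snorm k : cnorm (S k) <= 2.
Proof.
elim: k => [|k ih] /=; first by rewrite cnorm0 ler0n.
apply: (le_trans (cnormD _ _)); rewrite cnorm1.
have : cnorm (y * S k) <= 1.
  apply: (le_trans (cnormM _ _)).
  have -> : (1 : R) = 2^-1 * 2 by rewrite mulVf // pnatr_eq0.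
  by apply: ler_pM; rewrite ?cnorm_ge0 ?ih ?hy.
move=> h; apply: (le_trans (lerD (lexx 1) h)).
by rewrite (_ : 2 = 1 + 1 :> R).
Qed.

Lemma ypow n : cnorm (y ^+ n) <= (2^-1)^+n.
Proof.
apply: (le_trans (cnormX _ _)); apply: lerXn2r => //; rewrite ?nnegrE ?cnorm_ge0 ?invr_ge0 ?ler0n //.
Qed.

Lemma SL n : (1 - y) * S n = 1 - y ^+ n.
Proof.
elim: n => [|n ih] /=; first by rewrite mulr0 expr0 subrr.
rewrite mulrDr mulr1 mulrA (_ : (1 - y) * y = y * (1 - y)); last first.
  by rewrite mulrBl mulrBr mul1r mulr1.
by rewrite -mulrA ih mulrBr mulr1 -exprS addrA subrK.
Qed.

Lemma SR n : S n * (1 - y) = 1 - y ^+ n.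
Proof.
elim: n => [|n ih] /=; first by rewrite mul0r expr0 subrr.
by rewrite mulrDl mul1r -mulrA ih mulrBr mulr1 -exprS addrA subrK.
Qed.

Lemma Stail n k : cnorm (S (n + k) - S n) <= 2 * (2^-1)^+n.
Proof.
rewrite Sadd addrC addKr; apply: (le_trans (cnormM _ _)); rewrite mulrC.
by apply: ler_pM; rewrite ?cnorm_ge0 ?ypow ?Snorm.
Qed.

Lemma Scauchy N m : (N <= m)%N -> cnorm (S m - S N) <= 2 * (2^-1)^+N.
Proof. by move=> h; rewrite -(subnKC h); apply: Stail. Qed.

Lemma neumann : exists l : A, l * (1 - y) = 1 /\ (1 - y) * l = 1 /\ cnorm l <= 2.
Proof.
have [l hl] : exists l : A, forall e : R, 0 < e -> exists N : nat, forall n : nat,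
        (N <= n)%N -> cnorm (S n - l) < e.
  apply: cnorm_complete => e e0.
  have [N hN] := half_small (divr_gt0 e0 (ltr0n _ 4)).
  exists N => m n hm hn.
  rewrite (_ : S m - S n = (S m - S N) + (S N - S n)); last by rewrite addrA subrK.
  apply: (le_lt_trans (cnormD _ _)); rewrite (cnormB (S N)).
  apply: (le_lt_trans (lerD (Scauchy hm) (Scauchy hn))).
  have := hN N (leqnn N); set t := _ ^+ N => ht.
  rewrite -mulrDl (_ : (2 + 2 : R) = 4) //.
  by rewrite -ltr_pdivlMl // mulrC.
  by rewrite -natrD.
have key : forall e : R, 0 < e -> exists n, cnorm (S n - l) < e /\ (2^-1)^+n < e.
  move=> e e0; have [N1 h1] := hl e e0; have [N2 h2] := half_small e0.
  exists (maxn N1 N2); split; [apply: h1 | apply: h2]; by rewrite ?leq_maxl ?leq_maxr.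
exists l; split; [|split].
- apply/eqP; rewrite -subr_eq0; apply/eqP; apply: cnorm_small0 => e e0.
  have [n [hn1 hn2]] := key (e / 4) (divr_gt0 e0 (ltr0n _ 4)).
  have -> : l * (1 - y) - 1 = (l - S n) * (1 - y) - y ^+ n.
    by rewrite mulrBl SR opprB [_ ^+ n - 1]addrC addrA addrK.
  apply: (le_lt_trans (cnormBle _ _)).
  have h3 : cnorm ((l - S n) * (1 - y)) <= e / 4 * 2.
    apply: (le_trans (cnormM _ _)); apply: ler_pM; rewrite ?cnorm_ge0 //.
      by rewrite cnormB ltW.
    apply: (le_trans (cnormBle _ _)); rewrite cnorm1.
    apply: (le_trans (lerD (lexx 1) hy)).
    lra.
  apply: (le_lt_trans (lerD h3 (le_trans (ypow n) (ltW hn2)))).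
  lra.
- apply/eqP; rewrite -subr_eq0; apply/eqP; apply: cnorm_small0 => e e0.
  have [n [hn1 hn2]] := key (e / 4) (divr_gt0 e0 (ltr0n _ 4)).
  have -> : (1 - y) * l - 1 = (1 - y) * (l - S n) - y ^+ n.
    by rewrite mulrBr SL opprB [_ ^+ n - 1]addrC addrA addrK.
  apply: (le_lt_trans (cnormBle _ _)).
  have h3 : cnorm ((1 - y) * (l - S n)) <= 2 * (e / 4).
    apply: (le_trans (cnormM _ _)); apply: ler_pM; rewrite ?cnorm_ge0 //.
      apply: (le_trans (cnormBle _ _)); rewrite cnorm1.
      apply: (le_trans (lerD (lexx 1) hy)).
      lra.
    by rewrite cnormB ltW.
  apply: (le_lt_trans (lerD h3 (le_trans (ypow n) (ltW hn2)))).
  lra.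
- apply/ler_addgt0Pr => e e0.
  have [n [hn1 _]] := key e e0.
  rewrite (_ : l = S n - (S n - l)); last by rewrite opprB addrC subrK.
  apply: (le_trans (cnormBle _ _)); apply: lerD; [exact: Snorm | exact: ltW].
Qed.
End Neumann.
Section Proj.
Variables (R : realType) (A : cstarAlgType R).
Implicit Types a b : A.

Lemma unit_near1 (x : A) : cnorm (1 - x) <= 2^-1 ->
  x \is a GRing.unit /\ cnorm x^-1 <= 2.
Proof.
move=> h; have [l [h1 [h2 h3]]] := neumann h.
rewrite opprB addrC subrK in h1 h2.
have u : x \is a GRing.unit by apply/GRing.unitrP; exists l.
split=> //.
suff -> : x^-1 = l by [].
by rewrite -[LHS]mul1r -h1 -mulrA mulrV // mulr1.
Qed.

Lemma inv_comm (z a : A) : z \is a GRing.unit -> z * a = a * z -> z^-1 * a = a * z^-1.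
Proof.
move=> u h.
by rewrite -[LHS]mulr1 -(mulrV u) mulrA -[z^-1 * a * z]mulrA -h mulrA mulVr // mul1r.
Qed.

Lemma idem_mul (e : A) (a b c d : R[i]) : e * e = e ->
  (a *: e + b *: (1 - e)) * (c *: e + d *: (1 - e)) = (a * c) *: e + (b * d) *: (1 - e).
Proof.
move=> ee.
have e1 : e * (1 - e) = 0 by rewrite mulrBr mulr1 ee subrr.
have e2 : (1 - e) * e = 0 by rewrite mulrBl mul1r ee subrr.
have e3 : (1 - e) * (1 - e) = 1 - e by rewrite mulrBl mul1r e1 subr0.
rewrite mulrDl !mulrDr -!scalerAl -!scalerAr !scalerA ee e1 e2 e3 !scaler0 addr0 add0r.
by [].
Qed.

Lemma proj_positive (e : A) : is_projection e -> positive e.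
Proof.
case=> ee se; split=> // z hz.
have [->|z0] := eqVneq z 0; first exact: lexx.
have [->|z1] := eqVneq z 1; first exact: ler01.
exfalso; apply: hz; apply/GRing.unitrP.
have dec : e - z%:A = (1 - z) *: e + (- z) *: (1 - e).
  rewrite scalerBl scale1r scaleNr scalerBr.
  by rewrite opprB addrA subrK.
have z1' : 1 - z != 0 by rewrite subr_eq0 eq_sym.
exists ((1 - z)^-1 *: e + (- z)^-1 *: (1 - e)); rewrite dec !idem_mul //.
by rewrite mulVf // mulVf ?oppr_eq0 // mulfV // mulfV ?oppr_eq0 // !scale1r addrC subrK.
Qed.

Lemma proj_le (p q : A) : is_projection p -> is_projection q -> q * p = p -> cle p q.
Proof.
move=> [pp sp] [qq sq] qp.
have pq : p * q = p by rewrite -{1}sp -{1}sq -cstarM qp sp.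
split=> //; split=> //; apply: proj_positive; split.
  rewrite mulrBl !mulrBr qq qp pq pp subrr subr0 //.
by rewrite cstarB sp sq.
Qed.
End Proj.
Section Kap.
Variables (R : realType) (A : cstarAlgType R).

Lemma kapG (G H : A) : G * G = G -> H * H = H ->
  (1 + (G - H) * (H - G)) * G = G * H * G.
Proof.
move=> GG HH.
rewrite mulrDl mul1r -mulrA (mulrBl G H G) GG.
rewrite (mulrBl (H * G - G) G H) (mulrBr H) mulrA HH subrr subr0.
by rewrite mulrBr GG mulrA addrC subrK.
Qed.

Lemma zsym (G H : A) : (G - H) * (H - G) = (H - G) * (G - H).
Proof. by rewrite -mulrNN !opprB. Qed.

Lemma cstar_inv (z : A) : z \is a GRing.unit -> cstar z = z -> cstar z^-1 = z^-1.
Proof.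
move=> u sz.
have h1 : cstar z^-1 * z = 1 by rewrite -{2}sz -cstarM mulrV // cstar1.
by rewrite -[LHS]mulr1 -(mulrV u) mulrA h1 mul1r.
Qed.

Lemma kaplansky (G : A) : G * G = G ->
  let H := cstar G in let z := 1 + (G - H) * cstar (G - H) in
  z \is a GRing.unit ->
  let q := G * H * z^-1 in
  is_projection q /\ q * G = G.
Proof.
move=> GG H z u q.
have HH : H * H = H by rewrite /H -cstarM GG.
have sG : cstar H = G by rewrite /H cstarK.
have ez : z = 1 + (G - H) * (H - G) by rewrite /z cstarB sG.
have zG : z * G = G * H * G by rewrite ez kapG.
have zH : z * H = H * G * H by rewrite ez zsym kapG.
have sz : cstar z = z by rewrite ez cstarD cstar1 cstarM !cstarB sG.
have Gz : G * z = G * H * G.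
  by have := congr1 cstar zH; rewrite !cstarM sz sG -/H mulrA.
have Hz : H * z = H * G * H.
  by have := congr1 cstar zG; rewrite !cstarM sz -/H sG mulrA.
have ziG : z^-1 * G = G * z^-1 by apply: inv_comm; rewrite // zG Gz.
have ziH : z^-1 * H = H * z^-1 by apply: inv_comm; rewrite // zH Hz.
have szi : cstar z^-1 = z^-1 := cstar_inv u sz.
have zGH : z * (G * H) = G * H * z by rewrite mulrA zG -(mulrA G H G) -mulrA -Hz mulrA.
have qG : q * G = G.
  by rewrite /q -mulrA ziG mulrA -Gz -mulrA mulrV // mulr1.
have ziGH : z^-1 * (G * H) = G * H * z^-1 := inv_comm u zGH.
split=> //; split.
-   rewrite /q !mulrA -(mulrA (G * H * z^-1) G H) -(mulrA (G * H) z^-1 (G * H)) ziGH.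
  rewrite !mulrA -zG -(mulrA z G H) zGH -(mulrA (G * H) z z^-1) mulrV // mulr1.
  by [].
- by rewrite /q !cstarM szi sG -/H ziGH.
Qed.
End Kap.
Section Constr.
Variables (R : realType) (A : cstarAlgType R) (p : A).
Hypothesis hp : is_projection p.

Definition kk (r : A) := (p * r * p + (1 - p))^-1.
Definition dd (r : A) := (1 - r) * kk r * p * r.
Definition gg (r : A) := r + dd r.
Definition zz (r : A) := 1 + (gg r - cstar (gg r)) * cstar (gg r - cstar (gg r)).
Definition qq (r : A) := if cnorm (p - r * p) < 8^-1 then gg r * cstar (gg r) * (zz r)^-1 else p.

Lemma construct (r : A) : is_projection r -> cnorm (p - r * p) < 8^-1 ->
  [/\ is_projection (qq r), qq r * p = p & cnorm (r - qq r * r) <= 4 * cnorm (p - r * p)].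
Proof.
move=> hr hd; have [pp sp] := hp; have [rr sr] := hr.
set de := cnorm (p - r * p) in hd *.
have de0 : 0 <= de := cnorm_ge0 _.
set x := p * r * p + (1 - p).
have h1x : 1 - x = p * (p - r * p).
  by rewrite mulrBr pp mulrA /x opprD opprB addrA addrC addrA subrK.
have hx : cnorm (1 - x) <= 2^-1.
  rewrite h1x; apply: (le_trans (cnormM _ _)).
  have := cnorm_proj hp; have := cnorm_ge0 p; move: hd; rewrite -/de => *.
  have : cnorm p * de <= de by rewrite ler_piMl.
  lra.
have [ux kn] := unit_near1 hx.
have xp : x * p = p * r * p.
  by rewrite /x mulrDl mulrBl mul1r pp subrr addr0 -mulrA pp.
have px : p * x = p * r * p.
  by rewrite /x mulrDr mulrBr mulr1 pp subrr addr0 !mulrA pp.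
have kp : kk r * p = p * kk r by apply: inv_comm => //; rewrite xp px.
have kprp : kk r * (p * r * p) = p by rewrite -xp mulrA mulVr // mul1r.
set d := dd r.
have dp : d * p = (1 - r) * p by rewrite /d /dd -!mulrA (mulrA p r p) kprp.
have gp : gg r * p = p by rewrite /gg mulrDl -/d dp mulrBl mul1r addrC subrK.
have rd : r * d = 0 by rewrite /d /dd !mulrA mulrBr mulr1 rr subrr !mul0r.
have dr : d * r = d by rewrite /d /dd -mulrA rr.
have d2 : d * d = 0 by rewrite -{1}dr -mulrA rd mulr0.
have g2 : gg r * gg r = gg r.
  by rewrite /gg -/d mulrDl !mulrDr rr rd dr d2 addr0 addr0.
have dn : cnorm d <= 2 * de.
  have -> : d = (p - r * p) * kk r * r.
    by rewrite /d /dd -(mulrA (1 - r)) kp mulrA mulrBl mul1r.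
  apply: (le_trans (cnormM3 _ _ _)).
  have := cnorm_proj hr; have := cnorm_ge0 r; have := cnorm_ge0 (kk r).
  move=> h1 h2 h3.
  have : de * cnorm (kk r) <= de * 2 by apply: ler_wpM2l.
  have : de * cnorm (kk r) * cnorm r <= de * cnorm (kk r) by apply: ler_piMr => //; apply: mulr_ge0.
  rewrite -/de. lra.
have hw : cnorm (gg r - cstar (gg r)) <= 4 * de.
  rewrite /gg cstarD sr -/d opprD addrACA subrr add0r.
  apply: (le_trans (cnormBle _ _)); rewrite cnorm_cstar.
apply: (le_trans (lerD dn dn)); lra.
have hz : cnorm (1 - zz r) <= 2^-1.
  rewrite /zz opprD addrA subrr add0r cnormN.
  apply: (le_trans (cnormM _ _)); rewrite cnorm_cstar.
  have w0 := cnorm_ge0 (gg r - cstar (gg r)).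
  have : cnorm (gg r - cstar (gg r)) * cnorm (gg r - cstar (gg r)) <= 2^-1 * 2^-1.
    apply: ler_pM => //; lra.
  lra.
have [uz _] := unit_near1 hz.
have := @kaplansky _ _ (gg r) g2 uz => -[hq qg].
rewrite /qq hd; split=> //.
  by rewrite -gp mulrA qg.
have gr : gg r * r = gg r by rewrite /gg mulrDl rr -/d dr.
set q := gg r * cstar (gg r) * (zz r)^-1.
have er : r = gg r - d by rewrite /gg -/d addrK.
have qr : q * r = gg r - q * d by rewrite {1}er mulrBr qg.
have -> : r - q * r = q * d - d.
  by rewrite qr {1}er opprB addrC addrA subrK.
apply: (le_trans (cnormBle _ _)); apply: (le_trans (lerD (cnormM _ _) (lexx _))).
have := cnorm_proj hq; have := cnorm_ge0 q; have := cnorm_ge0 d => h1 h2 h3.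
have : cnorm q * cnorm d <= cnorm d by apply: ler_piMl.
lra.
Qed.

Lemma qq_fallback (r : A) : ~ (cnorm (p - r * p) < 8^-1) -> qq r = p.
Proof. by rewrite /qq; case: ifP. Qed.

Lemma qq_F (F : A -> Prop) (r : A) : sa_ideal F -> F p -> F r -> F (qq r).
Proof.
case=> F0 FD FZ FM FS Fp Fr; rewrite /qq; case: ifP => // _.
rewrite -mulrA; apply: (FM _ _ _).2; rewrite /gg; apply: FD => //.
by rewrite /dd; apply: (FM _ _ Fr).1.
Qed.
End Constr.
Lemma zmod_id (R : realType) (A : cstarAlgType R) (f a b c : A) :
  f - a - (b - c) + (a - c) = f - b.
Proof.
by rewrite opprB -addrA [X in _ + X]addrC [X in _ + X]addrA subrK addrA subrK.
Qed.

Theorem mainTheorem12 (R : realType) (A : cstarAlgType R) (F : A -> Prop) :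
  finite_type_algebra F ->
  forall p : A, is_projection p -> F p ->
  exists (I : Type) (le : I -> I -> Prop) (q : I -> A),
    proj_approx_unit F le q /\ (forall i : I, cle p (q i)).
Proof.
move=> [Hid [I [le [pa [dir proj apx]]]] _] p hp Fp.
have [_ _ letr dirj] := dir.
have Hid' := Hid; case: Hid' => F0 FD FZ FM FS.
set q := fun i => qq p (pa i).
have hq : forall i, is_projection (q i) /\ q i * p = p.
  move=> i; have [h|h] := boolP (cnorm (p - pa i * p) < 8^-1).
    by have [h1 h2 _] := construct hp (proj i).1 h.
  move/negP: h => h; rewrite /q qq_fallback //; split=> //; by case: hp => ->.
have left : forall f, F f -> net_to0 le (fun i => f - q i * f).
  move=> f Ff e e0.
  have [ha _] := apx f Ff; have [hpa _] := apx p Fp.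
  set c := cnorm f.
  have c0 : 0 <= c := cnorm_ge0 f.
  have [i1 h1] := ha (e / 4) (divr_gt0 e0 (ltr0n _ 4)).
  have e2p : 0 < Num.min (8^-1) (e / (8 * (c + 1))).
    rewrite lt_min invr_gt0 ltr0n /=; apply: divr_gt0 => //; apply: mulr_gt0 => //; lra.
  have [i2 h2] := hpa _ e2p.
  have [k [k1 k2]] := dirj i1 i2.
  exists k => i hi.
  have hd := h2 i (letr _ _ _ k2 hi); rewrite lt_min in hd; case/andP: hd => hd1 hd2.
  have hf := h1 i (letr _ _ _ k1 hi).
  have [hqp _ hb] := construct hp (proj i).1 hd1.
  rewrite /q -(zmod_id f (pa i * f) (qq p (pa i) * f) (qq p (pa i) * pa i * f)).
  rewrite -(mulrBl f (pa i) (qq p (pa i) * pa i)) -(mulrA (qq p (pa i)) (pa i) f) -mulrBr.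
  set de := cnorm (p - pa i * p) in hd1 hd2 hb *.
  set u := cnorm (f - pa i * f) in hf *.
  have de0 : 0 <= de := cnorm_ge0 _.
  have u0 : 0 <= u := cnorm_ge0 _.
  apply: (le_lt_trans (cnormD _ _)); apply: (le_lt_trans (lerD (cnormBle _ _) (lexx _))).
  apply: (le_lt_trans (lerD (lerD (lexx _) (cnormM _ _)) (cnormM _ _))); rewrite -/u -/c.
  have hq1 := cnorm_proj hqp.
  have hqn := cnorm_ge0 (qq p (pa i)).
  have t1 : cnorm (qq p (pa i)) * u <= u by apply: ler_piMl.
  have t2 : cnorm (pa i - qq p (pa i) * pa i) * c <= 4 * de * c by apply: ler_wpM2r.
  have t3 : de * c <= de * (c + 1) by apply: ler_wpM2l => //; lra.
  have t4 : de * (c + 1) < e / 8.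
    have hc : 0 < 8 * (c + 1) by lra.
    rewrite ltr_pdivlMr // mulrCA in hd2; lra.
  have t5 : 4 * de * c = 4 * (de * c) by rewrite mulrA.
  lra.
exists I, le, q; split.
  split=> //.
    move=> i; split; first exact: (hq i).1.
    exact: qq_F Hid Fp (proj i).2.
  move=> f Ff; split; first exact: left.
  move=> e e0; have [k hk] := left (cstar f) (FS f Ff) e e0; exists k => i hi.
  have [_ sq] := (hq i).1.
  by rewrite -cnorm_cstar cstarB cstarM sq; exact: hk.
move=> i; exact: proj_le hp (hq i).1 (hq i).2.
Qed.
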